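(* Let $X$ be a real Hilbert space and let $\eta,\eta'\in(0,1)$ with $\eta<\eta'$. If $\delta\in(0,1)$ satisfies $\frac{\delta+\eta}{1-\delta}\le\eta'$ and $x,y\in X$ are linearly independent vectors such that $\cos(x,y)\le\eta$ and $\cos(y-x,-x)\le\delta$, then $\|x\|\le\eta'\|y\|$.
   Context: For nonzero $u,w\in X$, $\cos(u,w)=\frac{\langle u,w\rangle}{\|u\|\|w\|}$. *)

(* Defs.v *)
From HB Require Import structures.
From mathcomp Require Import all_boot all_order all_algebra.
From mathcomp Require Import reals.
Set Implicit Arguments. Unset Strict Implicit. Unset Printing Implicit Defensive.
Import Order.TTheory GRing.Theory Num.Theory.
Local Open Scope ring_scope.

Definition ip_norm (R : realType) (X : lmodType R) (ip : X -> X -> R) (x : X) : R :=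
  Num.sqrt (ip x x).

Definition is_inner_product (R : realType) (X : lmodType R) (ip : X -> X -> R) : Prop :=
  [/\ (forall x y, ip x y = ip y x),
      (forall a x y z, ip (a *: x + y) z = a * ip x z + ip y z),
      (forall x, 0 <= ip x x) &
      (forall x, ip x x = 0 -> x = 0)].

Definition ip_complete (R : realType) (X : lmodType R) (ip : X -> X -> R) : Prop :=
  forall u : nat -> X,
    (forall e : R, 0 < e -> exists N : nat, forall m n : nat,
        (N <= m)%N -> (N <= n)%N -> ip_norm ip (u m - u n) < e) ->
    exists l : X, forall e : R, 0 < e -> exists N : nat, forall n : nat,
        (N <= n)%N -> ip_norm ip (u n - l) < e.

Definition is_real_hilbert (R : realType) (X : lmodType R) (ip : X -> X -> R) : Prop :=
  is_inner_product ip /\ ip_complete ip.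

(* cos(u,w) = <u,w> / (||u|| ||w||), used for nonzero u, w. *)
Definition ip_cos (R : realType) (X : lmodType R) (ip : X -> X -> R) (u w : X) : R :=
  ip u w / (ip_norm ip u * ip_norm ip w).

Definition lin_indep2 (R : realType) (X : lmodType R) (x y : X) : Prop :=
  forall a b : R, a *: x + b *: y = 0 -> a = 0 /\ b = 0.

(* Main.v *)
Require Import Defs.
From HB Require Import structures.
From mathcomp Require Import all_boot all_order all_algebra.
From mathcomp Require Import reals.
From mathcomp Require Import ring lra.
Import Order.TTheory GRing.Theory Num.Theory.
Local Open Scope ring_scope.

Section IP.
Variables (R : realType) (X : lmodType R) (ip : X -> X -> R).
Hypothesis hI : is_inner_product ip.

Lemma ip0l z : ip 0 z = 0.
Proof.
case: hI => _ hl _ _.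
have := hl 1 0 0 z; rewrite scale1r addr0 mul1r => h; lra.
Qed.

Lemma ipDl x y z : ip (x + y) z = ip x z + ip y z.
Proof. case: hI => _ hl _ _; by rewrite -[x]scale1r hl mul1r scale1r. Qed.

Lemma ipZl a x z : ip (a *: x) z = a * ip x z.
Proof. case: hI => _ hl _ _; by rewrite -[a *: x]addr0 hl ip0l addr0. Qed.

Lemma ipNl x z : ip (- x) z = - ip x z.
Proof. by rewrite -scaleN1r ipZl mulN1r. Qed.

Lemma ipBl x y z : ip (x - y) z = ip x z - ip y z.
Proof. by rewrite ipDl ipNl. Qed.

Lemma ipDr x y z : ip z (x + y) = ip z x + ip z y.
Proof. case: hI => hs _ _ _; by rewrite !(hs z) ipDl. Qed.

Lemma ipZr a x z : ip z (a *: x) = a * ip z x.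
Proof. case: hI => hs _ _ _; by rewrite !(hs z) ipZl. Qed.

Lemma ipNr x z : ip z (- x) = - ip z x.
Proof. case: hI => hs _ _ _; by rewrite !(hs z) ipNl. Qed.

Lemma ipBr x y z : ip z (x - y) = ip z x - ip z y.
Proof. by rewrite ipDr ipNr. Qed.

Lemma ip_pos x : x != 0 -> 0 < ip x x.
Proof.
case: hI => _ _ hp hd nx; rewrite lt_def hp andbT.
by apply/eqP => /hd; apply/eqP.
Qed.

End IP.

Theorem fact4p7 (R : realType) (X : lmodType R) (ip : X -> X -> R)
  (hX : is_real_hilbert ip) (eta eta' delta : R) (x y : X) :
  0 < eta < 1 -> 0 < eta' < 1 -> eta < eta' ->
  0 < delta < 1 -> (delta + eta) / (1 - delta) <= eta' ->
  lin_indep2 x y ->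
  ip_cos ip x y <= eta ->
  ip_cos ip (y - x) (- x) <= delta ->
  ip_norm ip x <= eta' * ip_norm ip y.
Proof.
case: hX => hI _ /andP[he0 he1] /andP[he'0 he'1] hee /andP[hd0 hd1] hde hli hc1 hc2.
have hs : forall u v, ip u v = ip v u by case: hI.
have hp : forall u, 0 <= ip u u by case: hI.
have nx : x != 0.
  apply/eqP => x0; have := hli 1 0; rewrite x0 scaler0 scale0r addr0 => /(_ erefl) [].
  by move/eqP; rewrite oner_eq0.
have ny : y != 0.
  apply/eqP => y0; have := hli 0 1; rewrite y0 scaler0 scale0r addr0 => /(_ erefl) [_].
  by move/eqP; rewrite oner_eq0.
have nyx : y - x != 0.
  apply/eqP => e; have := hli (-1) 1; rewrite scaleN1r scale1r addrC e.
  by move=> /(_ erefl) [_] /eqP; rewrite oner_eq0.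
set A := ip x x; set B := ip y y; set p := ip x y.
have A0 : 0 < A by exact: ip_pos.
have B0 : 0 < B by exact: ip_pos.
have E1 : ip (y - x) (- x) = A - p.
  by rewrite ipNr // !ipBl // (hs y x); rewrite /A /p; ring.
have E2 : ip (y - x) (y - x) = A + B - 2 * p.
  rewrite !ipBl // !ipBr // (hs y x) -/A -/B -/p; ring.
have C0 : 0 < ip (y - x) (y - x) by exact: ip_pos.
have CS : p ^+ 2 <= A * B.
  have := hp (B *: x - p *: y).
  rewrite !ipBl // !ipBr // !ipZl // !ipZr // (hs y x) -/A -/B -/p => h.
  have : 0 <= B * (A * B - p ^+ 2).
    set L := (X in 0 <= X) in h.
    have -> : B * (A * B - p ^+ 2) = L by rewrite /L; ring.
    exact: h.
  by rewrite pmulr_rge0 // subr_ge0.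
move: hc1 hc2; rewrite /ip_cos /ip_norm E1 ipNl // ipNr // opprK -/A -/B -/p.
set a := Num.sqrt A; set b := Num.sqrt B; set c := Num.sqrt _.
have a0 : 0 < a by rewrite sqrtr_gt0.
have b0 : 0 < b by rewrite sqrtr_gt0.
have c0 : 0 < c by rewrite sqrtr_gt0.
have aA : a ^+ 2 = A by rewrite sqr_sqrtr // ltW.
have bB : b ^+ 2 = B by rewrite sqr_sqrtr // ltW.
have cC : c ^+ 2 = A + B - 2 * p by rewrite sqr_sqrtr // -E2 ltW.
rewrite ler_pdivrMr ?mulr_gt0 // => h1.
rewrite ler_pdivrMr ?mulr_gt0 // => h2.
have pab : - (a * b) <= p.
  rewrite -aA -bB in CS; have ab0 : 0 < a * b by rewrite mulr_gt0.
  case: (lerP (-(a*b)) p) => // hlt.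
  have : 0 < (- p - a * b) * (- p + a * b) by rewrite mulr_gt0 //; lra.
  nra.
have cab : c <= a + b.
  have : c ^+ 2 <= (a + b) ^+ 2 by rewrite cC -aA -bB; nra.
  move=> h; case: (lerP c (a + b)) => // hlt.
  have : 0 < (c - (a + b)) * (c + (a + b)) by rewrite mulr_gt0 //; lra.
  nra.
have key : a * (1 - delta) <= (delta + eta) * b.
  have : a * (a * (1 - delta)) <= a * ((delta + eta) * b).
    have : delta * a * c <= delta * a * (a + b) by rewrite ler_pM2l ?mulr_gt0.
    rewrite -aA in h2; lra.
  by rewrite ler_pM2l.
have : a <= (delta + eta) / (1 - delta) * b.
  by rewrite mulrAC ler_pdivlMr ?subr_gt0.
move/le_trans; apply; rewrite ler_pM2r //.
Qed.
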